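(* Let $A$ be a finite nonempty set. (a) For every $M\subseteq A^A$: $(\overline{M})^{*}=\mathrm{Pol}\,\mathrm{gQuord}\,M$. (b) For a monoid $M\le A^A$ the following are equivalent: (i) $M$ is u-closed; (i)$'$ $M^{*}$ is a clone; (i)$''$ $\Gamma_M\in\mathrm{gQuord}(A)$; (ii) $M=\mathrm{End}\,Q$ for some $Q\subseteq\mathrm{gQuord}(A)$; (iii) $M^{*}=\mathrm{Pol}\,Q$ for some $Q\subseteq\mathrm{gQuord}(A)$; moreover the same $Q$ can be taken in (ii) and (iii). (c) For $Q\subseteq\mathrm{Rel}(A)$ the following are equivalent: (i) $\mathrm{End}\,Q$ is u-closed; (i)$'$ $(\mathrm{End}\,Q)^{*}$ is a clone; (i)$''$ $\Gamma_{\mathrm{End}\,Q}\in\mathrm{gQuord}(A)$; (ii) there is $Q'\subseteq\mathrm{gQuord}(A)$ with $\mathrm{End}\,Q=\mathrm{End}\,Q'$; (ii)$'$ there is $Q'\subseteq\mathrm{gQuord}(A)$ with $[Q]_{\exists,\wedge,\vee,=}=[Q']_{\exists,\wedge,\vee,=}$; (iii) there is $Q'\subseteq\mathrm{gQuord}(A)$ with $(\mathrm{End}\,Q)^{*}=\mathrm{Pol}\,Q'$; moreover the same $Q'$ can be taken in (ii) and (iii), and instead of ''there is $Q'\subseteq\mathrm{gQuord}(A)$'' one may take ''there is $\rho\in\mathrm{gQuord}(A)$'' with $Q'=\{\rho\}$.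
   Context: $\mathrm{Rel}(A)$ is the set of all finitary relations on $A$. An operation preserves a relation if componentwise application to tuples of the relation gives a tuple of the relation; $\mathrm{Pol}\,Q$ (resp. $\mathrm{End}\,Q$) is the set of all finitary operations (resp. unary maps) preserving all relations of $Q$. A relation $\rho\subseteq A^m$ is a generalized quasiorder if it is reflexive and for every $m\times m$-matrix over $A$ whose rows and columns all belong to $\rho$, the diagonal belongs to $\rho$; $\mathrm{gQuord}(A)$ is the set of all of them, and for $M\subseteq A^A$, $\mathrm{gQuord}\,M$ is the set of those preserved by all maps in $M$. Writing $A=\{a_1,\dots,a_k\}$, $\Gamma_M:=\{(g a_1,\dots,g a_k)\mid g\in M\}$. A translation of an $n$-ary $f$ is a unary map $x\mapsto f(b_1,\dots,b_{i-1},x,b_{i+1},\dots,b_n)$ with fixed $b_j$; $\mathrm{trl}(f)$ is the set of translations ($\{f\}$ for unary $f$); $N^*:=\{f\mid\mathrm{trl}(f)\subseteq N\}$. The u-closure $\overline M$ is the intersection of all monoids $N$ with $M\subseteq N\le A^A$ such that $N^*$ is a clone; $M$ is u-closed if $\overline M=M$. $[Q]_{\exists,\wedge,\vee,=}$ denotes the set of all relations definable from relations in $Q$ by positive formulas (formulas built from relation symbols of $Q$ and equality using only $\exists,\wedge,\vee$). *)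

(* Defs.v *)
From mathcomp Require Import all_boot.
From mathcomp Require Import boolp.
Set Implicit Arguments.
Unset Strict Implicit.
Unset Printing Implicit Defensive.

Section GQuord.
Variable A : finType.

Definition umap := {ffun A -> A}.
Definition idumap : umap := [ffun x => x].
Definition compmap (g h : umap) : umap := [ffun x => g (h x)].

(* (n.+1)-ary operations: operations have arity >= 1 *)
Definition op (n : nat) := {ffun {ffun 'I_n.+1 -> A} -> A}.
Definition opset := forall n : nat, op n -> Prop.
Definition opeq (C1 C2 : opset) := forall n (f : op n), C1 n f <-> C2 n f.

Definition relation (m : nat) := {set {ffun 'I_m -> A}}.
Definition relset := {m : nat & relation m} -> Prop.
Definition releq (Q1 Q2 : relset) := forall s, Q1 s <-> Q2 s.
Definition single (m : nat) (rho : relation m) : relset :=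
  fun s => s = existT _ m rho.

Definition preserves (n m : nat) (f : op n) (rho : relation m) : Prop :=
  forall R : 'I_n.+1 -> {ffun 'I_m -> A},
    (forall j, R j \in rho) -> [ffun i => f [ffun j => R j i]] \in rho.
Definition preserves1 (m : nat) (g : umap) (rho : relation m) : Prop :=
  forall r, r \in rho -> [ffun i => g (r i)] \in rho.

Definition Pol (Q : relset) : opset :=
  fun n f => forall s, Q s -> preserves f (projT2 s).
Definition End (Q : relset) : {set umap} :=
  [set g | `[< forall s, Q s -> preserves1 g (projT2 s) >]].

Definition is_gquord (m : nat) (rho : relation m) : Prop :=
  (forall a : A, [ffun _ : 'I_m => a] \in rho) /\
  (forall X : 'I_m -> 'I_m -> A,
     (forall i, [ffun j => X i j] \in rho) ->
     (forall j, [ffun i => X i j] \in rho) ->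
     [ffun i => X i i] \in rho).
Definition gQuord : relset := fun s => is_gquord (projT2 s).
Definition subrelset (Q1 Q2 : relset) := forall s, Q1 s -> Q2 s.
Definition gQuord_of (M : {set umap}) : relset :=
  fun s => is_gquord (projT2 s) /\ forall g, g \in M -> preserves1 g (projT2 s).

(* Gamma_M, using the enumeration a_1,...,a_k of A given by enum_val *)
Definition Gamma (M : {set umap}) : relation #|A| :=
  [set [ffun i : 'I_#|A| => g (enum_val i)] | g : umap in M].

Definition proj (n : nat) (i : 'I_n.+1) : op n := [ffun x : {ffun 'I_n.+1 -> A} => x i].
Definition compop (n k : nat) (f : op n) (gs : 'I_n.+1 -> op k) : op k :=
  [ffun x : {ffun 'I_k.+1 -> A} => f [ffun i => gs i x]].
Definition is_clone (C : opset) : Prop :=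
  (forall n (i : 'I_n.+1), C n (proj i)) /\
  (forall n k (f : op n) (gs : 'I_n.+1 -> op k),
     C n f -> (forall i, C k (gs i)) -> C k (compop f gs)).
Definition translation (n : nat) (f : op n) (i : 'I_n.+1)
  (b : {ffun 'I_n.+1 -> A}) : umap :=
  [ffun x : A => f [ffun j => if j == i then x else b j]].
(* N^* : all operations all of whose translations lie in N
   (for unary f, the translations are exactly f itself) *)
Definition star (N : {set umap}) : opset :=
  fun n f => forall i b, translation f i b \in N.

Definition is_monoid (M : {set umap}) : Prop :=
  idumap \in M /\ forall g h, g \in M -> h \in M -> compmap g h \in M.

Definition ubar (M : {set umap}) : {set umap} :=
  [set g | `[< forall N : {set umap}, is_monoid N -> M \subset N ->
                 is_clone (star N) -> g \in N >]].
Definition u_closed (M : {set umap}) : Prop := ubar M = M.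

Inductive pform : Type :=
| PAtom (m : nat) (rho : relation m) (v : 'I_m -> nat)
| PEq (i j : nat)
| PAnd (p q : pform)
| POr (p q : pform)
| PEx (i : nat) (p : pform)
| PFalse. (* empty disjunction *)

Fixpoint over (Q : relset) (p : pform) : Prop :=
  match p with
  | PAtom m rho _ => Q (existT _ m rho)
  | PEq _ _ => True
  | PAnd p q | POr p q => over Q p /\ over Q q
  | PEx _ p => over Q p
  | PFalse => True
  end.

Fixpoint sat (e : nat -> A) (p : pform) : Prop :=
  match p with
  | PAtom m rho v => [ffun i => e (v i)] \in rho
  | PEq i j => e i = e j
  | PAnd p q => sat e p /\ sat e q
  | POr p q => sat e p \/ sat e q
  | PEx i p => exists a : A, sat (fun k => if k == i then a else e k) p
  | PFalse => False
  end.

(* [Q]_{exists,/\,\/,=}: the m-ary relations defined by a positive formula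
   over Q whose free variables are among x_0,...,x_{m-1} *)
Definition pdefinable (Q : relset) : relset :=
  fun s => exists p, over Q p /\
    forall e : nat -> A,
      ([ffun i : 'I_(projT1 s) => e (nat_of_ord i)] \in projT2 s) <-> sat e p.

End GQuord.

(* Main.v *)
Require Import Defs.
From mathcomp Require Import all_boot.
From mathcomp Require Import boolp.
From Stdlib Require Import Classical.
Set Implicit Arguments. Unset Strict Implicit. Unset Printing Implicit Defensive.

Section Proofs.
Variable A : finType.
Variable a0 : A.
Implicit Types (M N : {set umap A}) (Q : relset A).

Lemma inEnd Q (g : umap A) : g \in End Q <-> forall s, Q s -> preserves1 g (projT2 s).
Proof. by rewrite inE; split => [/asboolP|?]; [| apply/asboolP]. Qed.

Lemma pres_trans m (rho : relation A m) n (f : op A n) :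
  is_gquord rho -> preserves f rho <-> forall i b, preserves1 (translation f i b) rho.
Proof.
move=> [Hr Hd]; split.
  move=> Hf i b r Hrr.
  have := Hf (fun j => if j == i then r else [ffun _ => b j]).
  have -> : [ffun l => f [ffun j => (if j == i then r else [ffun=> b j]) l]]
          = [ffun l => translation f i b (r l)].
    apply/ffunP => l; rewrite !ffunE; congr (f _); apply/ffunP => j; rewrite !ffunE.
    by case: (j == i); rewrite ?ffunE.
  apply => j; case: (j == i) => //.
move=> Ht R HR.
suff H : forall (k : nat) (b : {ffun 'I_n.+1 -> A}),
    [ffun l : 'I_m => f [ffun j : 'I_n.+1 => if (j < k)%N then R j l else b j]] \in rho.
  have := H n.+1 [ffun _ => a0].
  have -> // : [ffun l : 'I_m => f [ffun j : 'I_n.+1 => if (j < n.+1)%N then R j l else [ffun=> a0] j]]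
     = [ffun i => f [ffun j : 'I_n.+1 => R j i]].
  by apply/ffunP => l; rewrite !ffunE; congr (f _); apply/ffunP => j; rewrite !ffunE ltn_ord.
elim=> [|k IH] b.
  have -> : [ffun l : 'I_m => f [ffun j : 'I_n.+1 => if (j < 0)%N then R j l else b j]] = [ffun _ => f b].
    by apply/ffunP => l; rewrite !ffunE; congr (f _); apply/ffunP => j; rewrite !ffunE.
  exact: Hr.
case: (ltnP k n.+1) => Hk; last first.
  have -> : [ffun l : 'I_m => f [ffun j : 'I_n.+1 => if (j < k.+1)%N then R j l else b j]]
     = [ffun l : 'I_m => f [ffun j : 'I_n.+1 => if (j < k)%N then R j l else b j]]; last exact: IH.
  apply/ffunP => l; rewrite !ffunE; congr (f _); apply/ffunP => j; rewrite !ffunE.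
  by rewrite !(leq_trans (ltn_ord j)) // ltnW.
pose ko : 'I_n.+1 := Ordinal Hk.
pose X p q := f [ffun j : 'I_n.+1 => if (j < k)%N then R j q else if j == ko then R ko p else b j].
have := Hd X.
have -> : [ffun i => X i i] = [ffun l : 'I_m => f [ffun j : 'I_n.+1 => if (j < k.+1)%N then R j l else b j]].
  apply/ffunP => l; rewrite !ffunE /X; congr (f _); apply/ffunP => j; rewrite !ffunE.
  case: (ltngtP j k) => Hjk.
  - by rewrite ltnS ltnW.
  - rewrite ltnS leqNgt Hjk /=.
    by case: eqP => // Hj; move: Hjk; rewrite Hj /= ltnn.
  - rewrite Hjk ltnSn (_ : j == ko); last by apply/eqP/val_inj.
    by rewrite (_ : j = ko) //; apply/val_inj.
apply.
  move=> p.
  have := IH [ffun j : 'I_n.+1 => if j == ko then R ko p else b j].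
  have -> // : [ffun l : 'I_m => f [ffun j : 'I_n.+1 => if (j < k)%N then R j l else
      [ffun j0 => if j0 == ko then R ko p else b j0] j]] = [ffun q : 'I_m => X p q].
  by apply/ffunP => l; rewrite !ffunE /X; congr (f _); apply/ffunP => j; rewrite !ffunE.
move=> q.
have := Ht ko [ffun j : 'I_n.+1 => if (j < k)%N then R j q else b j] (R ko) (HR ko).
have -> // : [ffun i => translation f ko [ffun j : 'I_n.+1 => if (j < k)%N then R j q else b j] (R ko i)]
   = [ffun i => X i q].
apply/ffunP => l; rewrite !ffunE /X; congr (f _); apply/ffunP => j; rewrite !ffunE.
case: eqP => [->|Hj]; last by case: (j < k)%N.
by rewrite /= ltnn.
Qed.


Lemma star_End Q : subrelset Q (@gQuord A) -> opeq (star (End Q)) (Pol Q).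
Proof.
move=> HQ n f; split.
  move=> Hs s Qs; apply/(pres_trans _ (HQ _ Qs)) => i b.
  by have /inEnd := Hs i b; apply.
move=> Hp i b; apply/inEnd => s Qs.
by have /(pres_trans _ (HQ _ Qs)) := Hp s Qs; apply.
Qed.

Lemma Pol_clone Q : is_clone (Pol Q).
Proof.
split.
  move=> n i s _ R HR.
  have -> // : [ffun l => proj A i [ffun j => R j l]] = R i.
  by apply/ffunP => l; rewrite !ffunE.
move=> n k f gs Hf Hg s Qs R HR.
have := Hf s Qs (fun l => [ffun i => gs l [ffun j => R j i]]) (fun l => Hg l s Qs R HR).
have -> // : [ffun i => f [ffun j => [ffun i0 => gs j [ffun j0 => R j0 i0]] i]]
  = [ffun i => compop f gs [ffun j => R j i]].
by apply/ffunP => l; rewrite !ffunE; congr (f _); apply/ffunP => j; rewrite !ffunE.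
Qed.

Lemma clone_eq (C1 C2 : opset A) : opeq C1 C2 -> is_clone C1 -> is_clone C2.
Proof.
move=> E [H1 H2]; split; first by move=> n i; apply/E.
by move=> n k f gs Hf Hgs; apply/E; apply: H2; [apply/E | move=> i; apply/E].
Qed.

Lemma End_monoid Q : is_monoid (End Q).
Proof.
split.
  apply/inEnd => s _ r Hr.
  by have -> : [ffun i => idumap A (r i)] = r by apply/ffunP => i; rewrite !ffunE.
move=> g h /inEnd Hg /inEnd Hh; apply/inEnd => s Qs r Hr.
have := Hg s Qs _ (Hh s Qs r Hr).
have -> // : [ffun i => g ([ffun i0 => h (r i0)] i)] = [ffun i => compmap g h (r i)].
by apply/ffunP => i; rewrite !ffunE.
Qed.

Lemma inGamma M t : t \in Gamma M <-> exists2 g, g \in M & t = [ffun i : 'I_#|A| => g (enum_val i)].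
Proof. by split => /imsetP. Qed.

Lemma Gamma_g M g : g \in M -> [ffun i : 'I_#|A| => g (enum_val i)] \in Gamma M.
Proof. by move=> Hg; apply/inGamma; exists g. Qed.

Lemma End_single m (rho : relation A m) g : g \in End (single rho) <-> preserves1 g rho.
Proof.
split; first by move/inEnd => H; apply: (H (existT _ m rho)).
by move=> H; apply/inEnd => s ->.
Qed.

Lemma End_Gamma_sub M g : idumap A \in M -> preserves1 g (Gamma M) -> g \in M.
Proof.
move=> Hid H.
have /H /inGamma [h Hh E] := Gamma_g Hid.
suff -> : g = h by [].
apply/ffunP => a; move/ffunP: E => /(_ (enum_rank a)).
by rewrite !ffunE !enum_rankK.
Qed.

Lemma End_Gamma M : is_monoid M -> End (single (Gamma M)) = M.
Proof.
move=> [Hid Hc]; apply/setP => g; apply/idP/idP.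
  by move/End_single; apply: End_Gamma_sub.
move=> Hg; apply/End_single => r /inGamma [h Hh ->].
have := Gamma_g (Hc _ _ Hg Hh).
have -> // : [ffun i : 'I_#|A| => compmap g h (enum_val i)] =
    [ffun i : 'I_#|A| => g ([ffun i0 : 'I_#|A| => h (enum_val i0)] i)].
by apply/ffunP => i; rewrite !ffunE.
Qed.

Lemma Gamma_gquord N : is_clone (star N) -> is_gquord (Gamma N).
Proof.
move=> [Hp Hc]; split.
  move=> a; have Hk : (1 < 2)%N by [].
  have := Hp 1%N ord0 (Ordinal Hk) [ffun _ => a].
  set c := translation _ _ _ => Hcn.
  have := Gamma_g Hcn.
  have -> // : [ffun i : 'I_#|A| => c (enum_val i)] = [ffun _ => a].
  by apply/ffunP => i; rewrite !ffunE.
move=> X Hrow Hcol.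
pose f : op A 1 := [ffun x : {ffun 'I_2 -> A} => X (enum_rank (x ord0)) (enum_rank (x ord_max))].
have Hf : star N f.
  move=> i b; case: (unliftP ord0 i) => [j ->|->].
    rewrite (_ : lift ord0 j = ord_max); last by apply/val_inj; case: j => [[]].
    have /inGamma [g Hg E] := Hrow (enum_rank (b ord0)).
    suff -> : translation f ord_max b = g by [].
    apply/ffunP => x; rewrite !ffunE /=.
    move/ffunP: E => /(_ (enum_rank x)); rewrite !ffunE enum_rankK => <-.
    done.
  have /inGamma [g Hg E] := Hcol (enum_rank (b ord_max)).
  suff -> : translation f ord0 b = g by [].
  apply/ffunP => x; rewrite !ffunE /=.
  move/ffunP: E => /(_ (enum_rank x)); rewrite !ffunE enum_rankK => <-.
  done.
have := Hc 1%N 0%N f (fun _ => proj A ord0) Hf (fun i => Hp 0%N ord0) ord0 [ffun _ => a0].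
set d := translation _ _ _ => Hd.
have := Gamma_g Hd.
have -> // : [ffun i : 'I_#|A| => d (enum_val i)] = [ffun i => X i i].
by apply/ffunP => i; rewrite !ffunE /= enum_valK.
Qed.


Lemma inubar M g : g \in ubar M <-> forall N, is_monoid N -> M \subset N ->
   is_clone (star N) -> g \in N.
Proof. by rewrite inE; split => [/asboolP|?]; [| apply/asboolP]. Qed.

Lemma gQ_sub M : subrelset (gQuord_of M) (@gQuord A).
Proof. by move=> s []. Qed.

Lemma ubarE M : ubar M = End (gQuord_of M).
Proof.
apply/setP => g; apply/idP/idP.
  move/inubar; apply; first exact: End_monoid.
    by apply/subsetP => h Hh; apply/inEnd => s [_ H]; apply: H.
  apply: (clone_eq _ (Pol_clone (gQuord_of M))).
  move=> n f; apply: iff_sym; apply: star_End; exact: gQ_sub.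
move/inEnd => Hg; apply/inubar => N [Hid Hc] HMN Hcl.
apply: End_Gamma_sub => //; apply: (Hg (existT _ _ (Gamma N))); split.
  exact: Gamma_gquord.
move=> h /(subsetP HMN) Hh.
by apply/End_single; rewrite (End_Gamma (conj Hid Hc)).
Qed.


Lemma sub_ubar M : M \subset ubar M.
Proof. by apply/subsetP => g Hg; apply/inubar => N _ HMN _; exact: (subsetP HMN). Qed.

Lemma star_ubar M : opeq (star (ubar M)) (Pol (gQuord_of M)).
Proof. by rewrite ubarE; apply: star_End; exact: gQ_sub. Qed.

Lemma uc_clone M : is_monoid M -> u_closed M <-> is_clone (star M).
Proof.
move=> HM; split.
  move=> E; rewrite -E; apply: (clone_eq _ (Pol_clone (gQuord_of M))).
  by move=> n f; apply: iff_sym; apply: star_ubar.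
move=> Hcl; apply/eqP; rewrite eqEsubset sub_ubar andbT.
by apply/subsetP => g /inubar; apply; [exact: HM | exact: subxx | exact: Hcl].
Qed.

Lemma uc_gamma M : is_monoid M -> u_closed M <-> is_gquord (Gamma M).
Proof.
move=> HM; split; first by move/(uc_clone HM); apply: Gamma_gquord.
move=> HG; apply/eqP; rewrite eqEsubset sub_ubar andbT ubarE.
apply/subsetP => g /inEnd Hg; apply: End_Gamma_sub; first by case: HM.
apply: (Hg (existT _ _ (Gamma M))); split => // h Hh.
by apply/End_single; rewrite (End_Gamma HM).
Qed.

Lemma uc_End M : is_monoid M -> u_closed M <->
  (exists Q : relset A, subrelset Q (@gQuord A) /\ M = End Q).
Proof.
move=> HM; split.
  by move=> E; exists (gQuord_of M); split; [exact: gQ_sub | rewrite -{1}E ubarE].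
move=> [Q [HQ E]]; apply/(uc_clone HM).
apply: (clone_eq _ (Pol_clone Q)) => n f; rewrite E; apply: iff_sym; exact: star_End.
Qed.

Lemma uc_Pol M : is_monoid M -> u_closed M <->
  (exists Q : relset A, subrelset Q (@gQuord A) /\ opeq (star M) (Pol Q)).
Proof.
move=> HM; split.
  by move=> E; exists (gQuord_of M); split; [exact: gQ_sub | rewrite -{1}E; exact: star_ubar].
move=> [Q [HQ E]]; apply/(uc_clone HM).
by apply: (clone_eq _ (Pol_clone Q)) => n f; apply: iff_sym; apply: E.
Qed.

Lemma uc_both M : is_monoid M -> u_closed M <->
  (exists Q : relset A, subrelset Q (@gQuord A) /\ M = End Q /\ opeq (star M) (Pol Q)).
Proof.
move=> HM; split.
  move=> E; exists (gQuord_of M); split; first exact: gQ_sub.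
  by split; [rewrite -{1}E ubarE | rewrite -{1}E; exact: star_ubar].
by move=> [Q [HQ [E _]]]; apply/(uc_End HM); exists Q.
Qed.


Lemma sat_ext (p : pform A) : forall e e' : nat -> A, (forall k, e k = e' k) -> sat e p -> sat e' p.
Proof.
elim: p => [m rho v|i j|p IHp q IHq|p IHp q IHq|i p IHp|] e e' H //=.
- by have -> : [ffun i => e' (v i)] = [ffun i => e (v i)] by apply/ffunP => i; rewrite !ffunE H.
- by rewrite !H.
- by move=> [/IHp Hp /IHq Hq]; split; [apply: Hp | apply: Hq].
- by move=> [/IHp Hp|/IHq Hq]; [left; apply: Hp | right; apply: Hq].
- move=> [a Ha]; exists a; apply: (IHp _ _ _ Ha) => k.
  by case: (k == i).
Qed.

Lemma sat_pres Q (g : umap A) (p : pform A) : Defs.over Q p -> g \in End Q ->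
  forall e, sat e p -> sat (fun k => g (e k)) p.
Proof.
move=> Hov /inEnd Hg; elim: p Hov => [m rho v|i j|p IHp q IHq|p IHp q IHq|i p IHp|] //= Hov e.
- move=> H; have := Hg _ Hov _ H.
  by have -> : [ffun i => g ([ffun i0 => e (v i0)] i)] = [ffun i => g (e (v i))]
    by apply/ffunP => i; rewrite !ffunE.
- by move=> ->.
- by case: Hov => H1 H2 [Hp Hq]; split; [apply: IHp | apply: IHq].
- by case: Hov => H1 H2 [Hp|Hq]; [left; apply: IHp | right; apply: IHq].
- move=> [a Ha]; exists (g a); have := IHp Hov _ Ha.
  by apply: sat_ext => k; case: (k == i).
Qed.

Lemma pdef_pres Q s : pdefinable Q s -> forall g, g \in End Q -> preserves1 g (projT2 s).
Proof.
case: s => m rho [p [Hov H]] g Hg r Hr /=.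
pose e k := if insub k is Some i then r i else a0.
have He : [ffun i : 'I_m => e i] = r by apply/ffunP => i; rewrite ffunE /e valK.
have Hs : sat e p by apply/(H e); rewrite /= He.
have := proj2 (H (fun k => g (e k))) (sat_pres Hov Hg Hs).
have -> // : [ffun i : 'I_m => g (e i)] = [ffun i => g (r i)].
by apply/ffunP => i; rewrite !ffunE /e valK.
Qed.


Definition PTrue : pform A := PEq A 0 0.
Definition bigAnd (ps : seq (pform A)) := foldr (@PAnd A) PTrue ps.
Definition bigOr (ps : seq (pform A)) := foldr (@POr A) (PFalse A) ps.
Definition exs (vs : seq nat) (p : pform A) := foldr (@PEx A) p vs.

Lemma sat_bigAnd (T : eqType) (F : T -> pform A) (s : seq T) e :
  sat e (bigAnd (map F s)) <-> forall x, x \in s -> sat e (F x).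
Proof.
elim: s => [|x s IH] /=; first by split.
split.
  by move=> [H1 /IH H2] y; rewrite inE => /orP [/eqP ->|/H2].
by move=> H; split; [apply: H; rewrite inE eqxx | apply/IH => y Hy; apply: H; rewrite inE Hy orbT].
Qed.

Lemma over_bigAnd Q (T : eqType) (F : T -> pform A) (s : seq T) :
  (forall x, Defs.over Q (F x)) -> Defs.over Q (bigAnd (map F s)).
Proof. by move=> H; elim: s => [|x s IH] //=. Qed.

Lemma sat_bigOr (T : eqType) (F : T -> pform A) (s : seq T) e :
  sat e (bigOr (map F s)) <-> exists2 x, x \in s & sat e (F x).
Proof.
elim: s => [|x s IH] /=; first by split => // [[x]].
split.
  move=> [H|/IH [y Hy H]]; first by exists x; rewrite ?inE ?eqxx.
  by exists y; rewrite // inE Hy orbT.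
move=> [y]; rewrite inE => /orP [/eqP -> H|Hy H]; first by left.
by right; apply/IH; exists y.
Qed.

Lemma over_bigOr Q (T : eqType) (F : T -> pform A) (s : seq T) :
  (forall x, Defs.over Q (F x)) -> Defs.over Q (bigOr (map F s)).
Proof. by move=> H; elim: s => [|x s IH] //=. Qed.

Lemma sat_exs vs p e : sat e (exs vs p) <->
  exists e' : nat -> A, (forall v, v \notin vs -> e' v = e v) /\ sat e' p.
Proof.
elim: vs e => [|i vs IH] e /=.
  split; first by move=> H; exists e.
  by move=> [e' [H1 H2]]; apply: sat_ext H2 => k; rewrite H1.
split.
  move=> [a /IH [e' [H1 H2]]]; exists e'; split => // v.
  rewrite inE negb_or => /andP [/negbTE Hv Hv2]; by rewrite H1 // Hv.
move=> [e' [H1 H2]]; exists (e' i); apply/IH; exists e'; split => // v Hv.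
case: eqP => [->//|/eqP Hvi]; apply: H1; by rewrite inE negb_or Hvi.
Qed.

Lemma over_exs Q vs p : Defs.over Q p -> Defs.over Q (exs vs p).
Proof. by elim: vs. Qed.

Definition idx (m : nat) (a : A) := (m + index a (enum A))%N.
Definition hof (m : nat) (e : nat -> A) : umap A := [ffun a => e (idx m a)].

Lemma phi_aux Q m (s : seq (umap A)) : (forall g, g \in s -> g \notin End Q) ->
  exists p, Defs.over Q p /\ forall e, (hof m e \in End Q -> sat e p) /\
      (sat e p -> hof m e \notin s).
Proof.
elim: s => [|g s IH] Hs.
  by exists PTrue; split => // e; split.
have [p [Hov Hp]] := IH (fun h Hh => Hs h (@mem_behead _ (g :: s) _ Hh)).
have /negP Hg := Hs g (mem_head _ _).
have [[m0 rho0] [Q0 Hn]] : exists s0, Q s0 /\ ~ preserves1 g (projT2 s0).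
  apply: NNPP => Hne; apply: Hg; apply/inEnd => s0 Qs0.
  by apply: NNPP => Hnp; apply: Hne; exists s0.
have [r [Hr Hgr]] : exists r, r \in rho0 /\ [ffun i => g (r i)] \notin rho0.
  apply: NNPP => Hne; apply: Hn => r Hr; apply: NNPP => Hnr; apply: Hne.
  by exists r; split => //; apply/negP.
exists (PAnd p (PAtom rho0 (fun i => idx m (r i)))); split; first by split.
move=> e; split.
  move=> He; split; first exact: (proj1 (Hp e)).
  move/inEnd: He => /(_ _ Q0 r Hr) /=.
  by have -> : [ffun i => hof m e (r i)] = [ffun i => e (idx m (r i))]
    by apply/ffunP => i; rewrite !ffunE.
move=> /= [H1 H2]; rewrite inE negb_or (proj2 (Hp e) H1) andbT.
apply/eqP => E; move: Hgr; rewrite -E.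
have -> : [ffun i => hof m e (r i)] = [ffun i => e (idx m (r i))]
    by apply/ffunP => i; rewrite !ffunE.
by rewrite H2.
Qed.

Lemma phi_ex Q m : exists p, Defs.over Q p /\ forall e, sat e p <-> hof m e \in End Q.
Proof.
have [p [Hov Hp]] := @phi_aux Q m (enum (~: End Q))
  (fun g => ltac:(by rewrite mem_enum inE)).
exists p; split => // e; split; last exact: (proj1 (Hp e)).
by move/(proj2 (Hp e)); rewrite mem_enum inE negbK.
Qed.


Lemma pres_pdef Q m (rho : relation A m) :
  (forall g, g \in End Q -> preserves1 g rho) -> pdefinable Q (existT _ m rho).
Proof.
move=> Hpres.
have [phi [Hov Hphi]] := phi_ex Q m.
pose vs := [seq idx m a | a <- enum A].
pose F (r : {ffun 'I_m -> A}) := exs vs (PAnd phi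
   (bigAnd (map (fun j : 'I_m => PEq A j (idx m (r j))) (enum 'I_m)))).
exists (bigOr (map F (enum rho))); split.
  apply: over_bigOr => r; apply: over_exs; split => //; exact: over_bigAnd.
have Hvs : forall j : 'I_m, (j : nat) \notin vs.
  move=> j; apply/mapP => [[a _ E]]; move: (ltn_ord j).
  by rewrite E ltnNge /idx leq_addr.
have Hin : forall a, idx m a \in vs by move=> a; apply: map_f; rewrite mem_enum.
move=> e /=; split.
- move=> Hr; apply/sat_bigOr; exists [ffun i : 'I_m => e i]; first by rewrite mem_enum.
  apply/sat_exs.
  pose e' v := if v \in vs then nth a0 (enum A) (v - m) else e v.
  have He' : forall a, e' (idx m a) = a.
    by move=> a; rewrite /e' Hin /idx addKn nth_index // mem_enum.
  exists e'; split; first by move=> v /negbTE Hv; rewrite /e' Hv.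
  split.
    apply/Hphi; have -> : hof m e' = idumap A; last by case: (End_monoid Q).
    by apply/ffunP => a; rewrite !ffunE He'.
  apply/sat_bigAnd => j _ /=.
  by rewrite He' ffunE /e' (negbTE (Hvs j)).
move/sat_bigOr => [r]; rewrite mem_enum => Hr /sat_exs [e' [Hag [/Hphi Hh /sat_bigAnd Hj]]].
have := Hpres _ Hh r Hr.
have -> // : [ffun i => hof m e' (r i)] = [ffun i : 'I_m => e i].
apply/ffunP => j; rewrite !ffunE -(Hag _ (Hvs j)).
by have := Hj j (mem_enum _ j).
Qed.

Lemma pdefE Q s : pdefinable Q s <-> forall g, g \in End Q -> preserves1 g (projT2 s).
Proof.
split; first exact: pdef_pres.
by case: s => m rho H; apply: pres_pdef.
Qed.

Lemma pdef_eq Q Q' : releq (pdefinable Q) (pdefinable Q') <-> End Q = End Q'.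
Proof.
split; last by move=> E s; rewrite !pdefE E.
have H : forall Q1 Q2, releq (pdefinable Q1) (pdefinable Q2) -> End Q1 \subset End Q2.
  move=> Q1 Q2 E; apply/subsetP => g Hg; apply/inEnd => s Qs.
  have H2 : pdefinable Q2 s by apply/pdefE => h /inEnd; apply.
  by have /pdefE := proj2 (E s) H2; apply.
move=> E; apply/eqP; rewrite eqEsubset !H // => s; split => /E //.
Qed.


Lemma sub_single m (rho : relation A m) : is_gquord rho -> subrelset (single rho) (@gQuord A).
Proof. by move=> H s ->. Qed.

End Proofs.

Theorem corollary4p3 (A : finType) (hA : 0 < #|A|) :
  (* (a) *)
  (forall M : {set umap A}, opeq (star (ubar M)) (Pol (gQuord_of M)))
  /\
  (* (b) *)
  (forall M : {set umap A}, is_monoid M ->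
     let i := u_closed M in
     [/\ i <-> is_clone (star M),
         i <-> is_gquord (Gamma M),
         i <-> (exists Q : relset A, subrelset Q (@gQuord A) /\ M = End Q),
         i <-> (exists Q : relset A, subrelset Q (@gQuord A) /\
                  opeq (star M) (Pol Q)) &
         i <-> (exists Q : relset A, subrelset Q (@gQuord A) /\
                  M = End Q /\ opeq (star M) (Pol Q))])
  /\
  (* (c) *)
  (forall Q : relset A,
     let i := u_closed (End Q) in
     (i <-> is_clone (star (End Q))) /\
     (i <-> is_gquord (Gamma (End Q))) /\
     (i <-> (exists Q' : relset A, subrelset Q' (@gQuord A) /\ End Q = End Q')) /\
     (i <-> (exists Q' : relset A, subrelset Q' (@gQuord A) /\
              releq (pdefinable Q) (pdefinable Q'))) /\
     (i <-> (exists Q' : relset A, subrelset Q' (@gQuord A) /\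
              opeq (star (End Q)) (Pol Q'))) /\
     (i <-> (exists Q' : relset A, subrelset Q' (@gQuord A) /\
              End Q = End Q' /\ opeq (star (End Q)) (Pol Q'))) /\
     (i <-> (exists (m : nat) (rho : relation A m), is_gquord rho /\
              End Q = End (single rho))) /\
     (i <-> (exists (m : nat) (rho : relation A m), is_gquord rho /\
              releq (pdefinable Q) (pdefinable (single rho)))) /\
     (i <-> (exists (m : nat) (rho : relation A m), is_gquord rho /\
              opeq (star (End Q)) (Pol (single rho)))) /\
     (i <-> (exists (m : nat) (rho : relation A m), is_gquord rho /\
              End Q = End (single rho) /\
              opeq (star (End Q)) (Pol (single rho))))).
Proof.
have [a0 _] := card_gt0P hA.
split; first by move=> M; exact (star_ubar a0 M).
split.
  move=> M HM; cbv zeta; split;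
  [exact (uc_clone a0 HM) | exact (uc_gamma a0 HM) | exact (uc_End a0 HM)
  | exact (uc_Pol a0 HM) | exact (uc_both a0 HM)].
move=> Q; cbv zeta.
have HM := End_monoid Q.
have H7 : u_closed (End Q) <-> (exists (m : nat) (rho : relation A m), is_gquord rho /\
              End Q = End (single rho)).
  split.
    move=> Hu; exists #|A|, (Gamma (End Q)); split; first exact/(uc_gamma a0 HM).
    by rewrite End_Gamma.
  move=> [m [rho [Hg E]]]; apply/(uc_End a0 HM); exists (single rho); split => //.
  exact: sub_single.
have H9 : u_closed (End Q) <-> (exists (m : nat) (rho : relation A m), is_gquord rho /\
              End Q = End (single rho) /\ opeq (star (End Q)) (Pol (single rho))).
  split.
    move=> Hu; exists #|A|, (Gamma (End Q)).
    have Hg : is_gquord (Gamma (End Q)) by apply/(uc_gamma a0 HM).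
    split => //; split; first by rewrite End_Gamma.
    rewrite -{1}(End_Gamma HM); apply: star_End a0 _ _; exact: sub_single.
  move=> [m [rho [Hg [E _]]]]; apply/H7; exists m, rho; split => //.
split; first exact (uc_clone a0 HM).
split; first exact (uc_gamma a0 HM).
split; first exact (uc_End a0 HM).
split.
  rewrite (uc_End a0 HM); split => -[Q' [H1 H2]]; exists Q'; split => //;
  by apply/(pdef_eq a0).
split; first exact (uc_Pol a0 HM).
split; first exact (uc_both a0 HM).
split; first exact H7.
split.
  rewrite H7; split => -[m [rho [H1 H2]]]; exists m, rho; split => //;
  by apply/(pdef_eq a0).
split.
  split.
    by move/H9 => [m [rho [H1 [_ H3]]]]; exists m, rho.
  move=> [m [rho [H1 H2]]]; apply/(uc_Pol a0 HM); exists (single rho); split => //.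
  exact: sub_single.
exact H9.
Qed.
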